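(* Let $\Gamma$ be a metrized graph with adequate vertex set $V(\Gamma)$ and $D=\sum_{s\in V(\Gamma)}a_s s$ a divisor with $\deg D\neq-2$. Let $x,y\in\Gamma$. (1) If $x,y$ lie on the same edge $e$ and $e$ is a bridge, then $g_{\mu_D}(x,y)=\tau_D(x,y)-\tfrac12|x-y|$. Now let $x\in e_i$, $y\in e_j$, $e_i\neq e_j$, with $e_i$ of length $L_i$ and endpoints $p_i$ (coordinate $0$), $q_i$ (coordinate $L_i$), $e_j$ of length $L_j$ and endpoints $p_j$ (coordinate $0$), $q_j$ (coordinate $L_j$), and suppose at least one of $e_i,e_j$ is a bridge. (2) If both are bridges, then $g_{\mu_D}(x,y)$ equals $\tau_D(x,y)-\tfrac12(x+y+r(p_i,p_j))$ if $p_i$ and $p_j$ lie between $x$ and $y$; $\tau_D(x,y)-\tfrac12(x-y+L_j+r(p_i,q_j))$ if $p_i$ and $q_j$ lie between $x$ and $y$; $\tau_D(x,y)-\tfrac12(-x+y+L_i+r(q_i,p_j))$ if $q_i$ and $p_j$ lie between $x$ and $y$; $\tau_D(x,y)-\tfrac12(-x-y+L_i+L_j+r(q_i,q_j))$ if $q_i$ and $q_j$ lie between $x$ and $y$. (3) If $e_i$ is a bridge and $e_j$ is not, then \[g_{\mu_D}(x,y)=\begin{cases}\tau_D(x,y)+y^2\dfrac{L_j-r(p_j,q_j)}{2L_j^2}-\tfrac12T_1&\text{if }y\in\Gamma_{p_i},\\[2mm]\tau_D(x,y)+y^2\dfrac{L_j-r(p_j,q_j)}{2L_j^2}-\tfrac12T_2&\text{if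 }y\in\Gamma_{q_i},\end{cases}\] where $T_1=y\frac{L_j-r(p_j,q_j)+r(p_i,q_j)-r(p_i,p_j)}{L_j}+x+r(p_i,p_j)$ and $T_2=y\frac{L_j-r(p_j,q_j)+r(q_i,q_j)-r(q_i,p_j)}{L_j}-x+L_i+r(q_i,p_j)$. (The case where only $e_j$ is a bridge is symmetric.)
   Context: A metrized graph $\Gamma$ is a finite connected graph each of whose edges is identified with a closed interval $[0,L]$; a point on an edge with endpoints $p$ (at $0$) and $q$ (at $L$) is identified with its coordinate in $[0,L]$. A vertex set is a nonempty finite set containing all points of valence $\neq 2$; it is adequate if there are no loops or parallel edges. An edge $e$ with endpoints $p,q$ is a bridge if deleting its interior disconnects $\Gamma$; then $\Gamma_p$ (resp. $\Gamma_q$) denotes the component of the remainder containing $p$ (resp. $q$). For bridges $e_i,e_j$, ''$u$ and $w$ lie between $x$ and $y$'' means the path from $x$ to $y$ passes through the endpoints $u$ of $e_i$ and $w$ of $e_j$. $j_z(x,y)$ is the voltage function (Chinburg–Rumely): $\Delta_x j_z(x,y)=\delta_y-\delta_z$, $j_z(z,y)=0$; continuous, symmetric in $x,y$, nonnegative. $r(x,y):=j_y(x,x)$ is the resistance function, and $j_s(x,y)=\tfrac12(r(s,x)+r(s,y)-r(x,y))$. For a signed measure $\mu$ with $\mu(\Gamma)=1$, $g_\mu(x,y)=\int j_z(x,y)d\mu(z)-\int_{\Gamma^3}j_z(x,y)d\mu(z)d\mu(x)d\mu(y)$. $\mu_{\mathrm{can}}$ is the unique such measure with $\int j_z(x,x)d\mu(z)$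 constant in $x$, and $\tau(\Gamma)$ is half that constant. Divisors $D=\sum a_s s$ have integer coefficients and support in $V(\Gamma)$. The admissible measure is $\mu_D=\frac{1}{\deg D+2}(\sum a_s\delta_s+2\mu_{\mathrm{can}})$, and $g_{\mu_D}$ is the associated Arakelov–Green function; it is known that $g_{\mu_D}(x,y)=\frac{1}{\deg D+2}\big(\sum_s a_sj_s(x,y)+4\tau(\Gamma)-r(x,y)\big)-c_{\mu_D}$ with $c_{\mu_D}=\frac{1}{2(\deg D+2)^2}\big(8\tau(\Gamma)(\deg D+1)+\sum_{s,t}a_sa_tr(s,t)\big)$. With $r(D,x)=\sum_s a_s r(s,x)$, the tau function is $\tau_D(x,y)=\frac{1}{\deg D+2}\big(4\tau(\Gamma)+\tfrac12(r(D,x)+r(D,y))\big)-c_{\mu_D}$. *)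

(* Defs.v *)
From HB Require Import structures.
From mathcomp Require Import all_boot all_order all_algebra.
From mathcomp Require Import all_classical all_reals all_analysis.
Set Implicit Arguments.
Unset Strict Implicit.
Unset Printing Implicit Defensive.
Import Order.TTheory GRing.Theory Num.Theory.
Import numFieldNormedType.Exports.
Local Open Scope classical_set_scope.
Local Open Scope ring_scope.

(* A metrized graph is given by a finite vertex set [vert], a finite    *)
(* edge set [edge], and for each edge e its endpoints [src e] (the     *)
(* gpoint with coordinate 0, called p in the paper) and [tgt e] (the    *)
(* gpoint with coordinate [len e], called q) and its length [len e].    *)
Record mgraph (R : realType) := MGraph {
  vert : finType;
  edge : finType;
  src : edge -> vert;
  tgt : edge -> vert;
  len : edge -> R }.

Definition adj R (G : mgraph R) : rel (vert G) :=
  [rel u v | [exists e, ((src e == u) && (tgt e == v)) ||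
                        ((src e == v) && (tgt e == u))]].
Definition adj_wo R (G : mgraph R) (e0 : edge G) : rel (vert G) :=
  [rel u v | [exists e, (e != e0) && (((src e == u) && (tgt e == v)) ||
                                      ((src e == v) && (tgt e == u)))]].

(* Gamma is a metrized graph with vertex set V(Gamma) = vert G: positive *)
(* lengths, nonempty vertex set, connected.  (Points in the interior of *)
(* an edge have valence 2, so vert G contains all points of valence     *)
(* <> 2.)                                                               *)
Definition is_metrized_graph R (G : mgraph R) : Prop :=
  [/\ forall e : edge G, 0 < len e,
      (0 < #|vert G|)%N
    & forall u v : vert G, connect (@adj _ G) u v].

Definition adequate R (G : mgraph R) : Prop :=
  (forall e : edge G, src e != tgt e) /\
  (forall e e' : edge G,
     ((src e == src e') && (tgt e == tgt e')) ||
     ((src e == tgt e') && (tgt e == src e')) -> e = e').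

Definition bridge R (G : mgraph R) (e : edge G) : Prop :=
  ~~ connect (adj_wo e) (src e) (tgt e).

Inductive gpoint R (G : mgraph R) :=
  | PV of vert G
  | PE of edge G & R.

Definition valid_point R (G : mgraph R) (x : gpoint G) : Prop :=
  match x with
  | PV _ => True
  | PE e t => 0 < t < len e
  end.

Definition pt R (G : mgraph R) (e : edge G) (t : R) : gpoint G :=
  if t == 0 then PV (src e)
  else if t == len e then PV (tgt e)
  else PE e t.

(* x in Gamma_w, for a vertex w and an edge e0: x lies in the connected *)
(* component containing w of Gamma minus the interior of e0.           *)
Definition in_comp R (G : mgraph R) (e0 : edge G) (w : vert G)
    (x : gpoint G) : Prop :=
  match x with
  | PV v => connect (adj_wo e0) w v
  | PE e t => e != e0 /\ connect (adj_wo e0) w (src e)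
  end.

(* For a bridge e with endpoints p = src e, q = tgt e and the gpoint x   *)
(* of e with coordinate t: "p lies between x and y" (the path from x to *)
(* y passes through p), resp. "q lies between x and y".                *)
Definition src_between R (G : mgraph R) (e : edge G) (t : R)
    (y : gpoint G) : Prop := t = 0 \/ in_comp e (src e) y.
Definition tgt_between R (G : mgraph R) (e : edge G) (t : R)
    (y : gpoint G) : Prop := t = len e \/ in_comp e (tgt e) y.

Definition rslope (R : realType) (g : R -> R) (t : R) : R :=
  lim ((fun h => (g (t + h) - g t) / h) @ 0^'+).
Definition lslope (R : realType) (g : R -> R) (t : R) : R :=
  lim ((fun h => (g (t - h) - g t) / h) @ 0^'+).

Definition ind (R : realType) (P : Prop) : R := if `[< P >] then 1 else 0.

(* [is_voltage f y z]: f : Gamma -> R is continuous, piecewise linear    *)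
(* (f'' = 0 away from y and z), with Laplacian                           *)
(*   Delta f = - f'' dx - sum_p sigma_p(f) delta_p = delta_y - delta_z,  *)
(* sigma_p(f) being the sum of the outgoing derivatives of f at p, and   *)
(* normalized by f z = 0.                                                *)
Definition is_voltage R (G : mgraph R) (f : gpoint G -> R)
    (y z : gpoint G) : Prop :=
  [/\ f z = 0,
      (* continuity along every edge (with values at the endpoints given *)
      (* by the vertex values, this is continuity on Gamma)              *)
      forall e : edge G,
        {within `[0, len e], continuous (fun t => f (pt e t))},
      forall (e : edge G) (a b : R), 0 <= a -> a < b -> b <= len e ->
        (forall c, a < c < b -> pt e c <> y /\ pt e c <> z) ->
        exists al be : R, forall t, a <= t <= b -> f (pt e t) = al + be * t,
      forall v : vert G,
        \sum_(e | src e == v) rslope (fun t => f (pt e t)) 0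
        + \sum_(e | tgt e == v) lslope (fun t => f (pt e t)) (len e)
        = ind R (z = PV v) - ind R (y = PV v)
    &
      forall (e : edge G) (t : R), 0 < t < len e ->
        rslope (fun u => f (pt e u)) t + lslope (fun u => f (pt e u)) t
        = ind R (z = PE e t) - ind R (y = PE e t)].

(* [voltage_fun j]: j z x y is the voltage function j_z(x, y), i.e. for *)
(* all points y, z of Gamma, x |-> j z x y satisfies                     *)
(* Delta_x j_z(x,y) = delta_y - delta_z and j_z(z,y) = 0.                *)
Definition voltage_fun R (G : mgraph R) (j : gpoint G -> gpoint G -> gpoint G -> R)
  : Prop :=
  forall y z : gpoint G, valid_point y -> valid_point z ->
    is_voltage (fun x => j z x y) y z.

Definition resist R (G : mgraph R) (j : gpoint G -> gpoint G -> gpoint G -> R)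
  (x y : gpoint G) : R := j y x x.

(* A measure of the form  sum_v c_v delta_v + sum_e rho_e(t) dt  (gpoint *)
(* masses at vertices, continuous densities on edges); mu_can is of    *)
(* this form.                                                           *)
Definition integ R (G : mgraph R) (c : vert G -> R) (rho : edge G -> R -> R)
    (f : gpoint G -> R) : R :=
  \sum_v c v * f (PV v)
  + \sum_e (\int[lebesgue_measure]_(t in `[0, len e]) (rho e t * f (pt e t))).

(* [is_tau j tau]: tau = tau(Gamma), i.e. 2 tau is the constant value of *)
(* x |-> \int j_z(x,x) d mu_can(z), mu_can the (unique) measure of total *)
(* mass 1 for which this is constant.                                    *)
Definition is_tau R (G : mgraph R) (j : gpoint G -> gpoint G -> gpoint G -> R)
    (tau : R) : Prop :=
  exists (c : vert G -> R) (rho : edge G -> R -> R),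
    [/\ forall e, {within `[0, len e], continuous (rho e)},
        integ c rho (fun _ => 1) = 1
      & forall x : gpoint G, valid_point x ->
          integ c rho (fun z => j z x x) = 2 * tau].

Definition degD R (G : mgraph R) (a : vert G -> int) : int := \sum_s a s.

Definition cmuD R (G : mgraph R) (j : gpoint G -> gpoint G -> gpoint G -> R)
    (tau : R) (a : vert G -> int) : R :=
  (2 * ((degD a)%:~R + 2) ^+ 2)^-1 *
  (8 * tau * ((degD a)%:~R + 1)
   + \sum_s \sum_t (a s)%:~R * (a t)%:~R * resist j (PV s) (PV t)).

Definition gmuD R (G : mgraph R) (j : gpoint G -> gpoint G -> gpoint G -> R)
    (tau : R) (a : vert G -> int) (x y : gpoint G) : R :=
  ((degD a)%:~R + 2)^-1 *
    (\sum_s (a s)%:~R * j (PV s) x y + 4 * tau - resist j x y)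
  - cmuD j tau a.

Definition rD R (G : mgraph R) (j : gpoint G -> gpoint G -> gpoint G -> R)
    (a : vert G -> int) (x : gpoint G) : R :=
  \sum_s (a s)%:~R * resist j (PV s) x.

Definition tauD R (G : mgraph R) (j : gpoint G -> gpoint G -> gpoint G -> R)
    (tau : R) (a : vert G -> int) (x y : gpoint G) : R :=
  ((degD a)%:~R + 2)^-1 * (4 * tau + (rD j a x + rD j a y) / 2)
  - cmuD j tau a.

(* Main.v *)
Require Import Defs.
From HB Require Import structures.
From mathcomp Require Import all_boot all_order all_algebra.
From mathcomp Require Import all_classical all_reals all_analysis.
From mathcomp Require Import ring lra.
Import Order.TTheory GRing.Theory Num.Theory.
Import numFieldNormedType.Exports.
Local Open Scope ring_scope.

Module MT1.
Set Implicit Arguments. Unset Strict Implicit. Unset Printing Implicit Defensive.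

Section Slopes.
Variable R : realType.
Implicit Types F : R -> R.

Definition aff_on F (a b : R) (be : R) :=
  exists al : R, forall t, a <= t <= b -> F t = al + be * t.

Lemma rslope_aff F a b be : a < b -> aff_on F a b be -> rslope F a = be.
Proof.
move=> ab [al H]; rewrite /rslope; apply: (lim_near_cst (@Rhausdorff R)).
near=> h.
have h0 : 0 < h by near: h; exact: nbhs_right_gt.
have hb : h < b - a by near: h; apply: nbhs_right_lt; rewrite subr_gt0.
rewrite !H; last 2 first.
- by rewrite lexx ltW.
- by apply/andP; split; lra.
by field; rewrite gt_eqF.
Unshelve. all: by end_near.
Qed.

Lemma lslope_aff F a b be : a < b -> aff_on F a b be -> lslope F b = - be.
Proof.
move=> ab [al H]; rewrite /lslope; apply: (lim_near_cst (@Rhausdorff R)).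
near=> h.
have h0 : 0 < h by near: h; exact: nbhs_right_gt.
have hb : h < b - a by near: h; apply: nbhs_right_lt; rewrite subr_gt0.
rewrite !H; last 2 first.
- by rewrite lexx ltW.
- by apply/andP; split; lra.
by field; rewrite gt_eqF.
Unshelve. all: by end_near.
Qed.
End Slopes.

End MT1.
Import MT1.

Module MT2a.
Set Implicit Arguments. Unset Strict Implicit. Unset Printing Implicit Defensive.

Section Edge.
Variable R : realType.
Implicit Types F G : R -> R.

Definition PLI F (Q : seq R) (a b : R) :=
  forall a' b', a <= a' -> a' < b' -> b' <= b ->
    (forall c, c \in Q -> ~~ (a' < c < b')) -> exists be, aff_on F a' b' be.

Definition EL F G a b (Q : seq R) :=
  F a * rslope G a + F b * lslope G b + \sum_(c <- Q) F c * (rslope G c + lslope G c).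

Definition inI (a b : R) (Q : seq R) := forall c, c \in Q -> a < c < b.

Lemma EL_split F G a b c Q : c \notin Q ->
  EL F G a b (c :: Q) =
  EL F G a c [seq x <- Q | x < c] + EL F G c b [seq x <- Q | c < x].
Proof.
move=> cQ; rewrite /EL big_cons (bigID (fun x => x < c)) /= !big_filter.
have -> : \sum_(i <- Q | ~~ (i < c)) F i * (rslope G i + lslope G i) =
          \sum_(i <- Q | c < i) F i * (rslope G i + lslope G i).
  rewrite big_seq_cond [RHS]big_seq_cond; apply: eq_bigl => x.
  case xQ: (x \in Q) => //=; rewrite -leNgt le_eqVlt.
  by have -> : (c == x) = false by apply/negbTE; apply: contraNneq cQ => ->.
ring.
Qed.

Lemma PLI_l F Q a b c : a < c -> c <= b -> PLI F Q a b ->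
  PLI F [seq x <- Q | x < c] a c.
Proof.
move=> ac cb H a' b' h1 h2 h3 hQ; apply: H => //; first exact: le_trans cb.
move=> d dQ; case: (ltP d c) => dc.
  by apply: hQ; rewrite mem_filter dc.
by apply/negP => /andP [_ db]; have := lt_le_trans db (le_trans h3 dc); rewrite ltxx.
Qed.

Lemma PLI_r F Q a b c : a <= c -> c < b -> PLI F Q a b ->
  PLI F [seq x <- Q | c < x] c b.
Proof.
move=> ac cb H a' b' h1 h2 h3 hQ; apply: H => //; first exact: le_trans h1.
move=> d dQ; case: (ltP c d) => dc.
  by apply: hQ; rewrite mem_filter dc.
by apply/negP => /andP [ad _]; have := le_lt_trans h1 ad; rewrite ltNge dc.
Qed.

Lemma inI_l a b c Q : inI a b Q -> inI a c [seq x <- Q | x < c].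
Proof. by move=> H x; rewrite mem_filter => /andP [xc /H /andP [ax _]]; rewrite ax xc. Qed.
Lemma inI_r a b c Q : inI a b Q -> inI c b [seq x <- Q | c < x].
Proof. by move=> H x; rewrite mem_filter => /andP [xc /H /andP [_ xb]]; rewrite xc xb. Qed.

Lemma edge_ind (P : R -> R -> seq R -> Prop) :
  (forall a b, a < b -> P a b [::]) ->
  (forall a b c Q, a < c < b -> c \notin Q -> inI a b Q -> uniq Q ->
     P a c [seq x <- Q | x < c] -> P c b [seq x <- Q | c < x] -> P a b (c :: Q)) ->
  forall Q a b, a < b -> uniq Q -> inI a b Q -> P a b Q.
Proof.
move=> H0 HS Q; elim: {Q}(size Q) {-2}Q (leqnn (size Q)) => [|n IH] Q.
  by rewrite leqn0 => /nilP -> a b ab _ _; apply: H0.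
case: Q => [|c Q] /= szQ a b ab.
  by move=> _ _; apply: H0.
move=> /andP [cQ uQ] iQ.
have cI : a < c < b by apply: iQ; rewrite inE eqxx.
have iQ' : inI a b Q by move=> x xQ; apply: iQ; rewrite inE xQ orbT.
case/andP: (cI) => ac cb.
apply: HS => //.

- apply: (IH _ _ a c ac (filter_uniq _ uQ) (inI_l (c:=c) iQ')).
  by rewrite size_filter; exact: leq_trans (count_size _ _) szQ.
- apply: (IH _ _ c b cb (filter_uniq _ uQ) (inI_r (c:=c) iQ')).
  by rewrite size_filter; exact: leq_trans (count_size _ _) szQ.
Qed.

Lemma edge_green F G Q a b : a < b -> uniq Q -> inI a b Q ->
  PLI F Q a b -> PLI G Q a b -> EL F G a b Q = EL G F a b Q.
Proof.
move=> ab uQ iQ; move: F G.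
apply: (edge_ind (P := fun a b Q => forall F G, PLI F Q a b -> PLI G Q a b ->
   EL F G a b Q = EL G F a b Q)) ab uQ iQ => {a b Q}.
  move=> a b ab F G HF HG.
  have [bF [aF AF]] := HF a b (lexx _) ab (lexx _) (fun c => ltac:(by rewrite in_nil)).
  have [bG [aG AG]] := HG a b (lexx _) ab (lexx _) (fun c => ltac:(by rewrite in_nil)).
  have aI : a <= a <= b by rewrite lexx ltW.
  have bI : a <= b <= b by rewrite lexx ltW.
  rewrite /EL !big_nil (rslope_aff ab (ex_intro _ aF AF)) (lslope_aff ab (ex_intro _ aF AF)).
  rewrite (rslope_aff ab (ex_intro _ aG AG)) (lslope_aff ab (ex_intro _ aG AG)).
  rewrite (AF a aI) (AF b bI) (AG a aI) (AG b bI); ring.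
move=> a b c Q /andP [ac cb] cQ iQ uQ IH1 IH2 F G HF HG.
rewrite EL_split // [EL G F a b _]EL_split //.
have l1 := PLI_l ac (ltW cb) HF. have l2 := PLI_l ac (ltW cb) HG.
have r1 := PLI_r (ltW ac) cb HF. have r2 := PLI_r (ltW ac) cb HG.
rewrite /= ltxx in l1 l2 r1 r2.
by rewrite (IH1 F G l1 l2) (IH2 F G r1 r2).
Qed.
Lemma edge_energy F Q a b : a < b -> uniq Q -> inI a b Q ->
  PLI F Q a b -> EL F F a b Q <= 0 /\
  (EL F F a b Q = 0 -> forall t, a <= t <= b -> F t = F a).
Proof.
move=> ab uQ iQ; move: F.
apply: (edge_ind (P := fun a b Q => forall F, PLI F Q a b -> EL F F a b Q <= 0 /\
  (EL F F a b Q = 0 -> forall t, a <= t <= b -> F t = F a))) ab uQ iQ => {a b Q}.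
  move=> a b ab F HF.
  have [bF [aF AF]] := HF a b (lexx _) ab (lexx _) (fun c => ltac:(by rewrite in_nil)).
  have aI : a <= a <= b by rewrite lexx ltW.
  have bI : a <= b <= b by rewrite lexx ltW.
  rewrite /EL !big_nil (rslope_aff ab (ex_intro _ aF AF)) (lslope_aff ab (ex_intro _ aF AF)).
  rewrite (AF a aI) (AF b bI).
  have -> : (aF + bF * a) * bF + (aF + bF * b) * - bF = - (bF ^+ 2 * (b - a)) by ring.
  split.
    by rewrite addr0 oppr_le0 mulr_ge0 // ?sqr_ge0 // subr_ge0 ltW.
  rewrite addr0 => /eqP; rewrite oppr_eq0 mulf_eq0 subr_eq0 (gt_eqF ab) orbF sqrf_eq0 => /eqP b0 t tI.
  by rewrite (AF t tI) b0 !mul0r addr0.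
move=> a b c Q /andP [ac cb] cQ iQ uQ IH1 IH2 F HF.
have l1 := PLI_l ac (ltW cb) HF. have r1 := PLI_r (ltW ac) cb HF.
rewrite /= ltxx in l1 r1.
have [E1 C1] := IH1 F l1.
have [E2 C2] := IH2 F r1.
rewrite EL_split //; split; first by rewrite -[0]addr0 lerD.
move=> E0.
have e1 : EL F F a c [seq x <- Q | x < c] = 0.
  by lra.
have e2 : EL F F c b [seq x <- Q | c < x] = 0.
  by lra.
move=> t /andP [hat tb]; case: (leP t c) => tc.
  by apply: (C1 e1 t); rewrite hat tc.
rewrite (C2 e2 t); last by rewrite tb ltW.
by apply: (C1 e1 c); rewrite lexx ltW.
Qed.
End Edge.

End MT2a.
Import MT2a.

Module MT3.
Set Implicit Arguments. Unset Strict Implicit. Unset Printing Implicit Defensive.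

Section Graph.
Variable R : realType.
Variable G : mgraph R.
Hypothesis hpos : forall e : edge G, 0 < len e.

Implicit Types (f g h : gpoint G -> R) (P : seq (gpoint G)) (e : edge G) (v : vert G).

Definition Fe f (e : edge G) := fun t => f (pt e t).

Definition sigV f (v : vert G) :=
  \sum_(e | src e == v) rslope (fun t => f (pt e t)) 0
  + \sum_(e | tgt e == v) lslope (fun t => f (pt e t)) (len e).
Definition sigE f (e : edge G) (c : R) :=
  rslope (fun u => f (pt e u)) c + lslope (fun u => f (pt e u)) c.

Definition dV (x : gpoint G) (v : vert G) := ind R (x = PV v).
Definition dE (x : gpoint G) (e : edge G) (c : R) := ind R (x = PE e c).

Definition coordf (e : edge G) (p : gpoint G) : option R :=
  match p with PE e' c => if e' == e then Some c else None | PV _ => None end.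
Definition Qe P e := undup (pmap (coordf e) P).

Definition PL f P := forall e a b, 0 <= a -> a < b -> b <= len e ->
  (forall c, a < c < b -> ~ List.In (PE e c) P) ->
  exists be, aff_on (fun t => f (pt e t)) a b be.

Definition validP P := forall p, List.In p P -> valid_point p.

Lemma mem_Qe P e c : (c \in Qe P e) <-> List.In (PE e c) P.
Proof.
rewrite /Qe mem_undup; elim: P => [|p P [IH1 IH2]] //=.
case: p => [v|e' c'] /=.
  by split => [/IH1|[//|/IH2]]; [right|].
case: eqP => [->|ne] /=.
  rewrite inE; split.
    by case/orP => [/eqP ->|/IH1]; [left|right].
  by case => [[->]|/IH2 ->]; rewrite ?eqxx ?orbT.
split; first by move/IH1; right.
by case => [[/ne]|/IH2].
Qed.

Lemma pt0 e : pt e 0 = PV (src e).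
Proof. by rewrite /pt eqxx. Qed.
Lemma ptL e : pt e (len e) = PV (tgt e).
Proof. by rewrite /pt (gt_eqF (hpos e)) eqxx. Qed.
Lemma ptI e c : 0 < c < len e -> pt e c = PE e c.
Proof. by case/andP => c0 cL; rewrite /pt (gt_eqF c0) (lt_eqF cL). Qed.

Lemma valid_pt e t : 0 <= t <= len e -> valid_point (pt e t).
Proof.
case/andP => t0 tL; rewrite /pt; case: eqP => // /eqP t0'; case: eqP => // /eqP tL'.
by rewrite /= lt_neqAle eq_sym t0' t0 lt_neqAle tL' tL.
Qed.

Lemma Qe_inI P e : validP P -> inI 0 (len e) (Qe P e).
Proof. by move=> vP c /mem_Qe /vP. Qed.

Lemma PL_PLI f P e : PL f P -> PLI (fun t => f (pt e t)) (Qe P e) 0 (len e).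
Proof.
move=> H a b a0 ab bL HQ; apply: H => // c cI cP.
by have := HQ c (proj2 (mem_Qe P e c) cP); rewrite cI.
Qed.

Definition GL f g P :=
  \sum_v f (PV v) * sigV g v + \sum_e \sum_(c <- Qe P e) f (PE e c) * sigE g e c.

Lemma sum_src (X : edge G -> R) (h : vert G -> R) (s : edge G -> vert G) :
  \sum_v h v * \sum_(e | s e == v) X e = \sum_e h (s e) * X e.
Proof.
under eq_bigr do rewrite mulr_sumr.
rewrite (exchange_big_dep xpredT) //=; apply: eq_bigr => e _.
by rewrite (big_pred1 (s e)) // => v; rewrite /= eq_sym.
Qed.

Lemma GL_EL f g P : validP P ->
  GL f g P = \sum_e EL (fun t => f (pt e t)) (fun t => g (pt e t)) 0 (len e) (Qe P e).
Proof.
move=> vP; rewrite /GL /sigV.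
under eq_bigr do rewrite mulrDr.
rewrite big_split /= !sum_src -!big_split /=; apply: eq_bigr => e _.
rewrite /EL pt0 ptL; congr (_ + _).
rewrite big_seq_cond [RHS]big_seq_cond; apply: eq_bigr => c /andP [cQ _].
by rewrite ptI //; apply: (Qe_inI vP).
Qed.

Lemma green f g P : validP P -> PL f P -> PL g P -> GL f g P = GL g f P.
Proof.
move=> vP Pf Pg; rewrite !GL_EL //; apply: eq_bigr => e _.
apply: edge_green => //; first exact: undup_uniq.
- exact: Qe_inI.
- exact: PL_PLI.
- exact: PL_PLI.
Qed.

Lemma conn_const (hv : vert G -> R) u v :
  (forall e, hv (src e) = hv (tgt e)) -> connect (@adj _ G) u v -> hv u = hv v.
Proof.
move=> He /connectP [p pth ->]; elim: p u pth => [|w p IH] u //= /andP [a pth].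
rewrite -(IH w pth); case/existsP: a => e /orP [] /andP [/eqP <- /eqP <-] //; by rewrite He.
Qed.

Lemma harm_const h P : (forall u v : vert G, connect (@adj _ G) u v) ->
  validP P -> PL h P ->
  (forall v, sigV h v = 0) -> (forall e c, 0 < c < len e -> sigE h e c = 0) ->
  forall w1 w2, valid_point w1 -> valid_point w2 -> h w1 = h w2.
Proof.
move=> conn vP Ph HV HE.
have G0 : GL h h P = 0.
  rewrite /GL big1 ?add0r; last by move=> v _; rewrite HV mulr0.
  apply: big1 => e _; rewrite big_seq_cond big1 // => c /andP [cQ _].
  by rewrite HE ?mulr0 //; apply: (Qe_inI vP).
have En e := edge_energy (hpos e) (undup_uniq _) (Qe_inI (e:=e) vP) (PL_PLI (e:=e) Ph).
rewrite GL_EL // in G0.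
have E0 : forall e, EL (fun t => h (pt e t)) (fun t => h (pt e t)) 0 (len e) (Qe P e) = 0.
  move=> e; apply/eqP; rewrite -oppr_eq0; apply/eqP.
  have := @psumr_eq0P _ _ xpredT (fun e => - EL (fun t => h (pt e t)) (fun t => h (pt e t)) 0 (len e) (Qe P e)).
  apply => //; first by move=> i _; rewrite oppr_ge0; case: (En i).
  by rewrite sumrN G0 oppr0.
have Ce e t : 0 <= t <= len e -> h (pt e t) = h (PV (src e)).
  by move=> tI; rewrite -pt0; apply: (proj2 (En e) (E0 e)).
have Hv : forall e, h (PV (src e)) = h (PV (tgt e)).
  by move=> e; rewrite -ptL Ce // lexx ltW.
have Vc u v : h (PV u) = h (PV v).
  by apply: (conn_const (hv := fun v => h (PV v))) => //.
have Wc w : valid_point w -> forall v, h w = h (PV v).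
  case: w => [u|e c] /= wv v; first exact: Vc.
  case/andP: wv => c0 cL; rewrite -ptI ?c0 ?cL // Ce ?Vc // (ltW c0) (ltW cL) //.
move=> w1 w2 v1 v2.
case: w1 v1 => [u|e c] v1.
  by rewrite (Wc _ v2 u).
by rewrite (Wc _ v2 (src e)) (Wc _ v1 (src e)).
Qed.
End Graph.

End MT3.
Import MT3.

Module MT4.
Set Implicit Arguments. Unset Strict Implicit. Unset Printing Implicit Defensive.

Section Comb.
Variable R : realType.
Variable G : mgraph R.
Hypothesis hpos : forall e : edge G, 0 < len e.
Implicit Types (f g h : gpoint G -> R) (P : seq (gpoint G)) (e : edge G) (v : vert G).

Lemma near_free P e (t : R) : exists2 d : R, 0 < d &
  forall c, c != t -> `|c - t| < d -> ~ List.In (PE e c) P.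
Proof.
elim: P => [|p P [d d0 IH]]; first by exists 1; [exact: ltr01 | move=> c _ _ []].
case: p => [u|e' c'].
  by exists d => // c ct cd [//|]; apply: IH.
case: (boolP ((e' == e) && (c' != t))) => [/andP [/eqP ee ct']|H].
  exists (Num.min d `|c' - t|).
    by rewrite lt_min d0 normr_gt0 subr_eq0.
  move=> c ct; rewrite lt_min => /andP [cd cd'] [[_ cc]|].
    by rewrite cc ltxx in cd'.
  exact: IH.
exists d => // c ct cd [[ee cc]|]; last exact: IH.
by move: H; rewrite ee cc eqxx ct.
Qed.

Lemma aff_sub (F : R -> R) a b a' b' be : a <= a' -> b' <= b ->
  aff_on F a b be -> aff_on F a' b' be.
Proof.
move=> h1 h2 [al H]; exists al => t /andP [t1 t2]; apply: H.
by rewrite (le_trans h1 t1) (le_trans t2 h2).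
Qed.

Lemma rgerm f P e t : PL f P -> 0 <= t < len e ->
  exists b, t < b <= len e /\ exists be, aff_on (fun u => f (pt e u)) t b be.
Proof.
move=> Pf /andP [t0 tL]; have [d d0 Hd] := near_free P e t.
set b := Num.min (t + d / 2) (len e).
have tb : t < b by rewrite lt_min tL ltrDl divr_gt0.
have bL : b <= len e by rewrite ge_min lexx orbT.
exists b; split; first by rewrite tb bL.
apply: Pf => // c /andP [tc cb]; apply: Hd; first by rewrite gt_eqF.
rewrite gtr0_norm ?subr_gt0 //.
have : b <= t + d / 2 by rewrite ge_min lexx.
lra.
Qed.

Lemma lgerm f P e t : PL f P -> 0 < t <= len e ->
  exists a, 0 <= a < t /\ exists be, aff_on (fun u => f (pt e u)) a t be.
Proof.
move=> Pf /andP [t0 tL]; have [d d0 Hd] := near_free P e t.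
set a := Num.max (t - d / 2) 0.
have at' : a < t by rewrite gt_max t0 gtrBl divr_gt0.
have a0 : 0 <= a by rewrite le_max lexx orbT.
exists a; split; first by rewrite at' a0.
apply: Pf => // c /andP [ac ct]; apply: Hd; first by rewrite lt_eqF.
rewrite ltr0_norm ?subr_lt0 //.
have : t - d / 2 <= a by rewrite le_max lexx.
lra.
Qed.

Lemma rslope_comb (F1 F2 : R -> R) k t b1 b2 be1 be2 : t < b1 -> t < b2 ->
  aff_on F1 t b1 be1 -> aff_on F2 t b2 be2 ->
  rslope (fun u => F1 u + k * F2 u) t = rslope F1 t + k * rslope F2 t.
Proof.
move=> tb1 tb2 A1 A2.
have tb : t < Num.min b1 b2 by rewrite lt_min tb1 tb2.
have m1 : Num.min b1 b2 <= b1 by rewrite ge_min lexx.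
have m2 : Num.min b1 b2 <= b2 by rewrite ge_min lexx orbT.
have A1' := aff_sub (lexx t) m1 A1.
have A2' := aff_sub (lexx t) m2 A2.
rewrite (rslope_aff tb A1') (rslope_aff tb A2').
apply: (rslope_aff tb); case: A1' => [a1 H1]; case: A2' => [a2 H2].
by exists (a1 + k * a2) => u uI; rewrite H1 // H2 //; ring.
Qed.

Lemma lslope_comb (F1 F2 : R -> R) k t a1 a2 be1 be2 : a1 < t -> a2 < t ->
  aff_on F1 a1 t be1 -> aff_on F2 a2 t be2 ->
  lslope (fun u => F1 u + k * F2 u) t = lslope F1 t + k * lslope F2 t.
Proof.
move=> tb1 tb2 A1 A2.
have tb : Num.max a1 a2 < t by rewrite gt_max tb1 tb2.
have m1 : a1 <= Num.max a1 a2 by rewrite le_max lexx.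
have m2 : a2 <= Num.max a1 a2 by rewrite le_max lexx orbT.
have A1' := aff_sub m1 (lexx t) A1.
have A2' := aff_sub m2 (lexx t) A2.
rewrite (lslope_aff tb A1') (lslope_aff tb A2').
have -> : - be1 + k * - be2 = - (be1 + k * be2) by ring.
apply: (lslope_aff tb); case: A1' => [c1 H1]; case: A2' => [c2 H2].
by exists (c1 + k * c2) => u uI; rewrite H1 // H2 //; ring.
Qed.

Definition comb f k g := fun w => f w + k * g w.

Lemma PL_comb f g k P1 P2 : PL f P1 -> PL g P2 -> PL (comb f k g) (P1 ++ P2).
Proof.
move=> Pf Pg e a b a0 ab bL H.
have [b1 [a1 H1]] : exists be, aff_on (fun t => f (pt e t)) a b be.
  by apply: Pf => // c cI cP; apply: (H c cI); apply: List.in_or_app; left.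
have [b2 [a2 H2]] : exists be, aff_on (fun t => g (pt e t)) a b be.
  by apply: Pg => // c cI cP; apply: (H c cI); apply: List.in_or_app; right.
exists (b1 + k * b2), (a1 + k * a2) => t tI; rewrite /comb H1 // H2 //; ring.
Qed.

Lemma validP_cat P1 P2 : validP P1 -> validP P2 -> validP (P1 ++ P2).
Proof. by move=> v1 v2 p H; case: (List.in_app_or _ _ _ H) => [/v1|/v2]. Qed.



Lemma sigV_comb f g k P1 P2 v : PL f P1 -> PL g P2 ->
  sigV (comb f k g) v = sigV f v + k * sigV g v.
Proof.
move=> Pf Pg; rewrite /sigV.
have H0 e : (0:R) <= 0 < len e by rewrite lexx hpos.
have HL e : 0 < len e <= len e by rewrite lexx hpos.
rewrite (eq_bigr (fun e => rslope (fun t => f (pt e t)) 0 + k * rslope (fun t => g (pt e t)) 0)); last first.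
  move=> e _; have [b1 [/andP [tb1 _] [be1 A1]]] := rgerm Pf (H0 e).
  have [b2 [/andP [tb2 _] [be2 A2]]] := rgerm Pg (H0 e).
  exact: (rslope_comb k tb1 tb2 A1 A2).
rewrite [X in _ + X = _](eq_bigr (fun e => lslope (fun t => f (pt e t)) (len e) + k * lslope (fun t => g (pt e t)) (len e))); last first.
  move=> e _; have [b1 [/andP [_ tb1] [be1 A1]]] := lgerm Pf (HL e).
  have [b2 [/andP [_ tb2] [be2 A2]]] := lgerm Pg (HL e).
  exact: (lslope_comb k tb1 tb2 A1 A2).
rewrite !big_split /= -!mulr_sumr; ring.
Qed.

Lemma sigE_comb f g k P1 P2 e c : PL f P1 -> PL g P2 -> 0 < c < len e ->
  sigE (comb f k g) e c = sigE f e c + k * sigE g e c.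
Proof.
move=> Pf Pg /andP [c0 cL]; rewrite /sigE.
have H0 : 0 <= c < len e by rewrite ltW.
have HL : 0 < c <= len e by rewrite c0 ltW.
have [b1 [/andP [tb1 _] [be1 A1]]] := rgerm Pf H0.
have [b2 [/andP [tb2 _] [be2 A2]]] := rgerm Pg H0.
have [a1 [/andP [_ ta1] [ce1 C1]]] := lgerm Pf HL.
have [a2 [/andP [_ ta2] [ce2 C2]]] := lgerm Pg HL.
rewrite (rslope_comb k tb1 tb2 A1 A2) (lslope_comb k ta1 ta2 C1 C2); ring.
Qed.

Lemma indT (Q : Prop) : Q -> ind R Q = 1.
Proof. by move=> q; rewrite /ind asboolT. Qed.
Lemma indF (Q : Prop) : ~ Q -> ind R Q = 0.
Proof. by move=> q; rewrite /ind asboolF. Qed.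

Lemma point_eval f P p : validP P -> List.In p P ->
  \sum_v f (PV v) * dV p v + \sum_e \sum_(c <- Qe P e) f (PE e c) * dE p e c = f p.
Proof.
move=> vP pP; case: p pP => [u|e0 c0] pP.
  rewrite [X in _ + X]big1 ?addr0; last first.
    by move=> e _; rewrite big1 // => c _; rewrite /dE indF ?mulr0.
  rewrite (bigD1 u) //= /dV indT ?mulr1 // big1 ?addr0 // => v vu.
  rewrite indF ?mulr0 // => -[] uv; move: vu; rewrite uv eqxx //.
rewrite big1 ?add0r; last by move=> v _; rewrite /dV indF ?mulr0.
rewrite (bigD1 e0) //= [X in _ + X = _]big1 ?addr0; last first.
  move=> e ee; rewrite big1 // => c _; rewrite /dE indF ?mulr0 //.
  by move=> [] e0e; move: ee; rewrite e0e eqxx.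
have cQ : c0 \in Qe P e0 by apply/mem_Qe.
rewrite (big_rem c0) //= /dE indT ?mulr1 // big_seq big1 ?addr0 // => c.
rewrite (mem_rem_uniq _ (undup_uniq _)) inE => /andP [cc _].
by rewrite indF ?mulr0 // => -[] ce; rewrite ce eqxx in cc.
Qed.

Lemma GL_delta f g P z y : validP P -> List.In z P -> List.In y P ->
  (forall v, sigV g v = dV z v - dV y v) ->
  (forall e c, 0 < c < len e -> sigE g e c = dE z e c - dE y e c) ->
  GL f g P = f z - f y.
Proof.
move=> vP zP yP HV HE; rewrite /GL.
under eq_bigr do rewrite HV mulrBr.
rewrite (eq_bigr (fun e => \sum_(c <- Qe P e) (f (PE e c) * dE z e c - f (PE e c) * dE y e c))); last first.
  move=> e _; rewrite big_seq [RHS]big_seq; apply: eq_bigr => c cQ.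
  by rewrite HE ?mulrBr //; apply: (Qe_inI vP).
under [X in _ + X = _]eq_bigr do rewrite sumrB.
rewrite !sumrB.
rewrite -(point_eval f vP zP) -(point_eval f vP yP); ring.
Qed.

Variable j : gpoint G -> gpoint G -> gpoint G -> R.
Hypothesis vj : voltage_fun j.

Definition J z y := fun x => j z x y.

Lemma volt_PL y z : valid_point y -> valid_point z -> PL (J z y) [:: y; z].
Proof.
move=> vy vz e a b a0 ab bL H.
have [_ _ HL _ _] := vj vy vz.
have H' : forall c, a < c < b -> pt e c <> y /\ pt e c <> z.
  move=> c cI.
  have cI' : 0 < c < len e.
    by case/andP: cI => ac cb; rewrite (le_lt_trans a0 ac) (lt_le_trans cb bL).
  rewrite ptI //; split => E; apply: (H c cI); rewrite -E /=; [by left | by right; left].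
have [al [be Hab]] := HL e a b a0 ab bL H'.
by exists be, al.
Qed.

Lemma volt_sigV y z v : valid_point y -> valid_point z ->
  sigV (J z y) v = dV z v - dV y v.
Proof. by move=> vy vz; have [_ _ _ HV _] := vj vy vz; apply: HV. Qed.

Lemma volt_sigE y z e c : valid_point y -> valid_point z -> 0 < c < len e ->
  sigE (J z y) e c = dE z e c - dE y e c.
Proof.
move=> vy vz cI; have [_ _ _ _ HE] := vj vy vz.
by rewrite /sigE HE // /dE ptI.
Qed.

Lemma volt0 y z : valid_point y -> valid_point z -> j z z y = 0.
Proof. by move=> vy vz; have [H _ _ _ _] := vj vy vz. Qed.

End Comb.

End MT4.
Import MT4.

Module MT5.
Set Implicit Arguments. Unset Strict Implicit. Unset Printing Implicit Defensive.

Section Resist.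
Variable R : realType.
Variable G : mgraph R.
Hypothesis hpos : forall e : edge G, 0 < len e.
Hypothesis conn : forall u v : vert G, connect (@adj _ G) u v.
Variable j : gpoint G -> gpoint G -> gpoint G -> R.
Hypothesis vj : voltage_fun j.
Implicit Types (f g h : gpoint G -> R) (P : seq (gpoint G)) (e : edge G) (v : vert G).

Lemma validP2 (a b : gpoint G) : valid_point a -> valid_point b -> validP [:: a; b].
Proof. by move=> va vb p [<-|[<-|[]]]. Qed.

Lemma harm h P : validP P -> PL h P ->
  (forall v, sigV h v = 0) -> (forall e c, 0 < c < len e -> sigE h e c = 0) ->
  forall w1 w2, valid_point w1 -> valid_point w2 -> h w1 = h w2.
Proof. by move=> *; apply: (harm_const hpos conn) => //; eassumption. Qed.

Lemma PL_sub f P1 P2 : PL f P1 -> (forall p, List.In p P1 -> List.In p P2) -> PL f P2.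
Proof. by move=> H S e a b a0 ab bL HP; apply: H => // c cI /S; apply: HP. Qed.

Lemma rsym x y : valid_point x -> valid_point y -> j y x x = j x y y.
Proof.
move=> vx vy.
set h := comb (J j y x) 1 (J j x y).
have P1 := volt_PL vj vx vy. have P2 := volt_PL vj vy vx.
have Ph : PL h ([:: x; y] ++ [:: y; x]) by apply: PL_comb.
have vP : validP ([:: x; y] ++ [:: y; x]) by apply: validP_cat; apply: validP2.
have := harm vP Ph _ _ vx vy.
rewrite /h /comb /J (volt0 vj vy vx) (volt0 vj vx vy) mulr0 addr0 mul1r add0r; apply.
  move=> v; rewrite (sigV_comb hpos _ _ P1 P2) !volt_sigV //; ring.
move=> e c cI; rewrite (sigE_comb _ P1 P2 cI) !volt_sigE //; ring.
Qed.

Lemma rrec s x y : valid_point s -> valid_point x -> valid_point y -> j s x y = j s y x.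
Proof.
move=> vs vx vy.
set P := [:: y; s] ++ [:: x; s].
have vP : validP P by apply: validP_cat; apply: validP2.
have P1 : PL (J j s y) P.
  by apply: PL_sub (volt_PL vj vy vs) _ => p; rewrite /P /=; tauto.
have P2 : PL (J j s x) P.
  by apply: PL_sub (volt_PL vj vx vs) _ => p; rewrite /P /=; tauto.
have := green hpos vP P1 P2.
have sP : List.In s P by right; left.
have xP : List.In x P by right; right; left.
have yP : List.In y P by left.
rewrite (GL_delta (J j s y) vP sP xP (fun v => volt_sigV vj v vx vs)
           (fun e c cI => volt_sigE vj vx vs cI)).
rewrite (GL_delta (J j s x) vP sP yP (fun v => volt_sigV vj v vy vs)
           (fun e c cI => volt_sigE vj vy vs cI)).
rewrite /J (volt0 vj vy vs) (volt0 vj vx vs) !sub0r => /eqP.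
by rewrite eqr_opp => /eqP.
Qed.

Lemma rF1 s x y : valid_point s -> valid_point x -> valid_point y ->
  2 * j s x y = j s x x + j s y y - j x y y.
Proof.
move=> vs vx vy.
have P1 := volt_PL vj vy vs. have P2 := volt_PL vj vx vs. have P3 := volt_PL vj vy vx.
have P12 := PL_comb (-1) P1 P2.
set h := comb (comb (J j s y) (-1) (J j s x)) (-1) (J j x y).
have Ph : PL h (([:: y; s] ++ [:: x; s]) ++ [:: y; x]) by apply: PL_comb.
have vP : validP (([:: y; s] ++ [:: x; s]) ++ [:: y; x]).
  by apply: validP_cat; [apply: validP_cat|]; apply: validP2.
have HV : forall v, sigV h v = 0.
  move=> v; rewrite (sigV_comb hpos _ _ P12 P3) (sigV_comb hpos _ _ P1 P2) !volt_sigV //; ring.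
have HE : forall e c, 0 < c < len e -> sigE h e c = 0.
  move=> e c cI; rewrite (sigE_comb _ P12 P3 cI) (sigE_comb _ P1 P2 cI) !volt_sigE //; ring.
have E1 := harm vP Ph HV HE vs vx.
have E2 := harm vP Ph HV HE vs vy.
move: E1 E2; rewrite /h /comb /J (volt0 vj vy vs) (volt0 vj vx vs) (volt0 vj vy vx).
rewrite (rrec vs vy vx) => E1 E2; lra.
Qed.

Lemma gmu_tau tau (a : vert G -> int) x y : degD a != (-2)%R ->
  valid_point x -> valid_point y ->
  gmuD j tau a x y = tauD j tau a x y - resist j x y / 2.
Proof.
move=> hd vx vy.
have Hs s : j (PV s) x y = (resist j (PV s) x + resist j (PV s) y - resist j x y) / 2.
  rewrite /resist -(@rsym x (PV s) vx I) -(@rsym y (PV s) vy I) -(rsym vy vx).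
  have := rF1 (s := PV s) I vx vy; lra.
rewrite /gmuD /tauD /rD.
under eq_bigr do rewrite Hs.
set d := (degD a)%:~R.
have dE : d = \sum_s (a s)%:~R by rewrite /d /degD rmorph_sum.
have d2 : d + 2 != 0.
  have -> : d + 2 = (degD a + 2)%:~R by rewrite /d intrD.
  by rewrite intr_eq0 addr_eq0.
have -> : \sum_i (a i)%:~R * ((resist j (PV i) x + resist j (PV i) y - resist j x y) / 2)
  = (\sum_s (a s)%:~R * resist j (PV s) x + \sum_s (a s)%:~R * resist j (PV s) y) / 2
    - d * resist j x y / 2.
  rewrite dE -big_split /= !mulr_suml -sumrB.
  by apply: eq_bigr => s _; ring.
field.
exact: d2.
Qed.
End Resist.

End MT5.
Import MT5.

Module MT6.
Set Implicit Arguments. Unset Strict Implicit. Unset Printing Implicit Defensive.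

Section Chi.
Variable R : realType.
Variable G : mgraph R.
Hypothesis hpos : forall e : edge G, 0 < len e.
Implicit Types (f g h : gpoint G -> R) (P : seq (gpoint G)) (e : edge G) (v : vert G).

Lemma sum_single (e0 : edge G) (X : edge G -> R) (Pr : pred (edge G)) :
  (forall e, e != e0 -> X e = 0) -> \sum_(e | Pr e) X e = (Pr e0)%:R * X e0.
Proof.
move=> H; rewrite big_mkcond (bigD1 e0) //= big1 ?addr0.
  by case: (Pr e0); rewrite ?mul1r ?mul0r.
by move=> e ee; rewrite H //; case: (Pr e).
Qed.

Lemma dV_PV u v : dV (PV u : gpoint G) v = (u == v)%:R.
Proof.
case: eqP => [->|ne]; first by rewrite /dV indT.
by rewrite /dV indF // => -[].
Qed.

Lemma dV_PE e c v : dV (PE e c) v = 0.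
Proof. by rewrite /dV indF. Qed.
Lemma dE_PV u e c : dE (PV u : gpoint G) e c = 0.
Proof. by rewrite /dE indF. Qed.

Lemma adj_wo_sym e : symmetric (adj_wo e).
Proof.
move=> u v; rewrite /adj_wo /=; apply/existsP/existsP => -[e' H]; exists e';
by rewrite orbC.
Qed.

Lemma conn_wo_sym e u v : connect (adj_wo e) u v = connect (adj_wo e) v u.
Proof. exact: (sym_connect_sym (@adj_wo_sym e)). Qed.

Lemma side_edge e e' w : e' != e ->
  connect (adj_wo e) w (src e') = connect (adj_wo e) w (tgt e').
Proof.
move=> ne.
have A : adj_wo e (src e') (tgt e') by apply/existsP; exists e'; rewrite ne !eqxx.
have A' : adj_wo e (tgt e') (src e') by rewrite adj_wo_sym.
apply/idP/idP => H.
  by apply: connect_trans H (connect1 A).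
by apply: connect_trans H (connect1 A').
Qed.

Definition chi e (t : R) (w : gpoint G) : R :=
  match w with
  | PV v => if connect (adj_wo e) (tgt e) v then t else 0
  | PE e' u => if e' == e then (if u <= t then u else t)
               else if connect (adj_wo e) (tgt e) (src e') then t else 0
  end.

Variable e : edge G.
Hypothesis br : bridge e.
Variable t : R.
Hypothesis tI : 0 <= t <= len e.

Lemma chi_src : chi e t (PV (src e)) = 0.
Proof. by rewrite /= conn_wo_sym (negbTE br). Qed.
Lemma chi_tgt : chi e t (PV (tgt e)) = t.
Proof. by rewrite /= connect0. Qed.

Lemma chi_on u : 0 <= u <= len e -> chi e t (pt e u) = if u <= t then u else t.
Proof.
move=> /andP [u0 uL]; rewrite /pt; case: eqP => [->|/eqP u0'].
  by rewrite chi_src; case/andP: tI => -> _.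
case: eqP => [->|/eqP uL'].
  rewrite chi_tgt; case: ifP => // Lt; apply/eqP; rewrite eq_le Lt.
  by case/andP: tI => _ ->.
by rewrite /= eqxx.
Qed.

Lemma chi_off e' u : e' != e -> 0 <= u <= len e' ->
  chi e t (pt e' u) = if connect (adj_wo e) (tgt e) (src e') then t else 0.
Proof.
move=> ne _; rewrite /pt; case: eqP => _; first by [].
case: eqP => _; first by rewrite /= -side_edge.
by rewrite /= (negbTE ne).
Qed.

Lemma chi_aff1 a b : 0 <= a -> b <= t -> aff_on (fun u => chi e t (pt e u)) a b 1.
Proof.
move=> a0 bt; exists 0 => u /andP [au ub].
have uL : u <= len e by case/andP: tI => _ tL; exact: le_trans ub (le_trans bt tL).
by rewrite chi_on ?(le_trans a0 au) // (le_trans ub bt) add0r mul1r.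
Qed.

Lemma chi_aff2 a b : t <= a -> b <= len e -> aff_on (fun u => chi e t (pt e u)) a b 0.
Proof.
move=> ta bL; exists t => u /andP [au ub].
have u0 : 0 <= u by case/andP: tI => t0 _; exact: le_trans t0 (le_trans ta au).
rewrite chi_on ?u0 ?(le_trans ub bL) // mul0r addr0.
case: ifP => // ut; apply/eqP; rewrite eq_le ut; exact: le_trans ta au.
Qed.

Lemma chi_aff_off e' : e' != e -> aff_on (fun u => chi e t (pt e' u)) 0 (len e') 0.
Proof.
move=> ne; exists (if connect (adj_wo e) (tgt e) (src e') then t else 0) => u uI.
by rewrite chi_off // mul0r addr0.
Qed.

Lemma chi_PL : PL (chi e t) [:: pt e t].
Proof.
move=> e' a b a0 ab bL H.
case: (eqVneq e' e) => [ee|ne].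
  subst e'.
  case: (leP t a) => ta; first by exists 0; exact: chi_aff2.
  case: (leP b t) => bt; first by exists 1; exact: chi_aff1.
  exfalso; apply: (H t); first by rewrite ta bt.
  by left; rewrite ptI // (le_lt_trans a0 ta) (lt_le_trans bt bL).
by exists 0; exact: (aff_sub a0 bL (chi_aff_off ne)).
Qed.

Lemma chi_sigV v : sigV (chi e t) v = dV (PV (src e)) v - dV (pt e t) v.
Proof.
rewrite /sigV (sum_single (e0:=e)); last first.
  by move=> e' ne; rewrite (rslope_aff (hpos e') (chi_aff_off ne)).
rewrite [X in _ + X](sum_single (e0:=e)); last first.
  by move=> e' ne; rewrite (lslope_aff (hpos e') (chi_aff_off ne)) oppr0.
case/andP: tI => t0 tL.
case: (eqVneq t 0) => [t00|tn0].
  have -> : rslope (fun u => chi e t (pt e u)) 0 = 0.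
    by apply: (rslope_aff (hpos e)); apply: chi_aff2; rewrite ?t00.
  have -> : lslope (fun u => chi e t (pt e u)) (len e) = 0.
    by rewrite (lslope_aff (hpos e) (chi_aff2 _ _)) ?oppr0 ?t00.
  by rewrite t00 pt0 !mulr0 addr0 subrr.
have t0' : 0 < t by rewrite lt_neqAle eq_sym tn0 t0.
have -> : rslope (fun u => chi e t (pt e u)) 0 = 1.
  by apply: (rslope_aff t0'); apply: chi_aff1.
case: (eqVneq t (len e)) => [tL'|tLn].
  have -> : lslope (fun u => chi e t (pt e u)) (len e) = -1.
    by rewrite (lslope_aff (hpos e) (chi_aff1 _ _)) ?tL'.
  by rewrite tL' (ptL hpos) !dV_PV; ring.
have tL'' : t < len e by rewrite lt_neqAle tLn tL.
have -> : lslope (fun u => chi e t (pt e u)) (len e) = 0.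
  by rewrite (lslope_aff tL'' (chi_aff2 _ _)) ?oppr0.
by rewrite ptI ?t0' // dV_PV dV_PE; ring.
Qed.

Lemma chi_sigE e' c : 0 < c < len e' ->
  sigE (chi e t) e' c = dE (PV (src e)) e' c - dE (pt e t) e' c.
Proof.
move=> /andP [c0 cL]; rewrite dE_PV sub0r /sigE.
case: (eqVneq e' e) => [ee|ne]; last first.
  have A := chi_aff_off ne.
  rewrite (rslope_aff cL (aff_sub (ltW c0) (lexx _) A)).
  rewrite (lslope_aff c0 (aff_sub (lexx _) (ltW cL) A)) oppr0 addr0.
  case/andP: tI => t0 tL; rewrite /pt; case: eqP => _; first by rewrite dE_PV oppr0.
  case: eqP => _; first by rewrite dE_PV oppr0.
  by rewrite /dE indF ?oppr0 // => -[] ee _; rewrite ee eqxx in ne.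
subst e'; case/andP: tI => t0 tL.
case: (ltgtP c t) => ct.
- rewrite (rslope_aff ct (chi_aff1 (ltW c0) (lexx _))).
  rewrite (lslope_aff c0 (chi_aff1 (lexx _) (ltW ct))).
  rewrite /pt; case: eqP => _; first by rewrite dE_PV; ring.
  case: eqP => _; first by rewrite dE_PV; ring.
  by rewrite /dE indF; [ring | move=> -[] tc; rewrite tc ltxx in ct].
- rewrite (rslope_aff cL (chi_aff2 (ltW ct) (lexx _))).
  rewrite (lslope_aff ct (chi_aff2 (lexx _) (ltW cL))).
  rewrite /pt; case: eqP => _; first by rewrite dE_PV; ring.
  case: eqP => _; first by rewrite dE_PV; ring.
  by rewrite /dE indF; [ring | move=> -[] tc; rewrite tc ltxx in ct].
- subst c.
  rewrite (rslope_aff cL (chi_aff2 (lexx _) (lexx _))).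
  rewrite (lslope_aff c0 (chi_aff1 (lexx _) (lexx _))).
  by rewrite ptI ?c0 ?cL // /dE indT //; ring.
Qed.
End Chi.

End MT6.
Import MT6.

Module MT7.
Set Implicit Arguments. Unset Strict Implicit. Unset Printing Implicit Defensive.

Section Tent.
Variable R : realType.
Variable G : mgraph R.
Hypothesis hpos : forall e : edge G, 0 < len e.
Implicit Types (f g h : gpoint G -> R) (P : seq (gpoint G)) (e : edge G) (v : vert G).

Definition tent e (s : R) (w : gpoint G) : R :=
  match w with
  | PV _ => 0
  | PE e' u => if e' == e then
       (if u <= s then u * (len e - s) / len e else s * (len e - u) / len e)
     else 0
  end.

Variable e : edge G.
Variable s : R.
Hypothesis sI : 0 < s < len e.

Lemma tent_on u : 0 <= u <= len e -> tent e s (pt e u) =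
  if u <= s then u * (len e - s) / len e else s * (len e - u) / len e.
Proof.
case/andP: sI => s0 sL.
move=> /andP [u0 uL]; rewrite /pt; case: eqP => [->|/eqP u0'].
  by rewrite (ltW s0) mul0r mul0r.
case: eqP => [->|/eqP uL'].
  by rewrite leNgt sL /= subrr mulr0 mul0r.
by rewrite /= eqxx.
Qed.

Lemma tent_off e' u : e' != e -> tent e s (pt e' u) = 0.
Proof.
move=> ne; rewrite /pt; case: eqP => _ //; case: eqP => _ //.
by rewrite /= (negbTE ne).
Qed.

Lemma tent_aff1 a b : 0 <= a -> b <= s ->
  aff_on (fun u => tent e s (pt e u)) a b ((len e - s) / len e).
Proof.
move=> a0 bs; exists 0 => u /andP [au ub].
case/andP: sI => s0 sL.
have u0 : 0 <= u := le_trans a0 au.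
have us : u <= s := le_trans ub bs.
rewrite tent_on ?u0 ?us //=; last by rewrite (le_trans us (ltW sL)).
by rewrite add0r mulrC mulrA; ring.
Qed.

Lemma tent_aff2 a b : s <= a -> b <= len e ->
  aff_on (fun u => tent e s (pt e u)) a b (- (s / len e)).
Proof.
move=> sa bL; exists s => u /andP [au ub].
case/andP: sI => s0 sL.
have u0 : 0 <= u by apply: le_trans (ltW s0) (le_trans sa au).
have uL : u <= len e := le_trans ub bL.
rewrite tent_on ?u0 ?uL //.
have Ln : len e != 0 by rewrite gt_eqF.
case: ifP => us.
  have -> : u = s by apply/eqP; rewrite eq_le us (le_trans sa au).
  by field.
by field.
Qed.

Lemma tent_aff_off e' : e' != e -> aff_on (fun u => tent e s (pt e' u)) 0 (len e') 0.
Proof. by move=> ne; exists 0 => u _; rewrite tent_off // mul0r addr0. Qed.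

Lemma tent_PL : PL (tent e s) [:: PE e s].
Proof.
move=> e' a b a0 ab bL H.
case: (eqVneq e' e) => [ee|ne].
  subst e'.
  case: (leP s a) => sa; first by eexists; exact: tent_aff2.
  case: (leP b s) => bs; first by eexists; exact: tent_aff1.
  by exfalso; apply: (H s); [rewrite sa bs | left].
by exists 0; exact: (aff_sub a0 bL (tent_aff_off ne)).
Qed.

Lemma tent_sigV v : sigV (tent e s) v =
  (1 - s / len e) * dV (PV (src e)) v + s / len e * dV (PV (tgt e)) v - dV (PE e s) v.
Proof.
case/andP: sI => s0 sL.
rewrite /sigV (sum_single (e0:=e)); last first.
  by move=> e' ne; rewrite (rslope_aff (hpos e') (tent_aff_off ne)).
rewrite [X in _ + X](sum_single (e0:=e)); last first.
  by move=> e' ne; rewrite (lslope_aff (hpos e') (tent_aff_off ne)) oppr0.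
rewrite (rslope_aff s0 (tent_aff1 (lexx _) (lexx _))).
rewrite (lslope_aff sL (tent_aff2 (lexx _) (lexx _))).
rewrite !dV_PV dV_PE.
have Ln : len e != 0 by rewrite gt_eqF.
by field.
Qed.

Lemma tent_sigE e' c : 0 < c < len e' ->
  sigE (tent e s) e' c = (1 - s / len e) * dE (PV (src e)) e' c
     + s / len e * dE (PV (tgt e)) e' c - dE (PE e s) e' c.
Proof.
move=> /andP [c0 cL]; rewrite !dE_PV !mulr0 !add0r /sigE.
case: (eqVneq e' e) => [ee|ne]; last first.
  have A := tent_aff_off ne.
  rewrite (rslope_aff cL (aff_sub (ltW c0) (lexx _) A)).
  rewrite (lslope_aff c0 (aff_sub (lexx _) (ltW cL) A)) oppr0 addr0.
  by rewrite /dE indF ?oppr0 // => -[] ee _; rewrite ee eqxx in ne.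
subst e'; case/andP: sI => s0 sL.
case: (ltgtP c s) => cs.
- rewrite (rslope_aff cs (tent_aff1 (ltW c0) (lexx _))).
  rewrite (lslope_aff c0 (tent_aff1 (lexx _) (ltW cs))).
  by rewrite /dE indF; [ring | move=> -[] tc; rewrite tc ltxx in cs].
- rewrite (rslope_aff cL (tent_aff2 (ltW cs) (lexx _))).
  rewrite (lslope_aff cs (tent_aff2 (lexx _) (ltW cL))).
  by rewrite /dE indF; [ring | move=> -[] tc; rewrite tc ltxx in cs].
- subst c.
  rewrite (rslope_aff cL (tent_aff2 (lexx _) (lexx _))).
  rewrite (lslope_aff c0 (tent_aff1 (lexx _) (lexx _))).
  rewrite /dE indT //.
  have Ln : len e != 0 by rewrite gt_eqF.
  by field.
Qed.
End Tent.

End MT7.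
Import MT7.

Module MT8.
Set Implicit Arguments. Unset Strict Implicit. Unset Printing Implicit Defensive.

Section Dist.
Variable R : realType.
Variable G : mgraph R.
Hypothesis hpos : forall e : edge G, 0 < len e.
Hypothesis conn : forall u v : vert G, connect (@adj _ G) u v.
Variable j : gpoint G -> gpoint G -> gpoint G -> R.
Hypothesis vj : voltage_fun j.
Implicit Types (f g h : gpoint G -> R) (P : seq (gpoint G)) (e : edge G) (v : vert G).

Lemma dist_chi e t w : bridge e -> 0 <= t <= len e -> valid_point w ->
  j w (pt e t) (pt e t) = t + j w (PV (src e)) (PV (src e)) - 2 * chi e t w.
Proof.
move=> br tI vw.
set x := pt e t; set p : gpoint G := PV (src e).
have vx : valid_point x := valid_pt tI.
have vp : valid_point p := I.
have P1 := volt_PL vj vx vw. have P2 := volt_PL vj vp vw.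
have P3 := chi_PL br tI.
have P12 := PL_comb (-1) P1 P2.
set h := comb (comb (J j w x) (-1) (J j w p)) (-1) (chi e t).
have Ph : PL h (([:: x; w] ++ [:: p; w]) ++ [:: pt e t]) by apply: PL_comb.
have vP : validP (([:: x; w] ++ [:: p; w]) ++ [:: pt e t]).
  apply: validP_cat; first by apply: validP_cat; apply: validP2.
  by move=> q [<-|[]].
have HV : forall v, sigV h v = 0.
  move=> v; rewrite (sigV_comb hpos _ _ P12 P3) (sigV_comb hpos _ _ P1 P2) !volt_sigV //.
  rewrite chi_sigV //; ring.
have HE : forall e c, 0 < c < len e -> sigE h e c = 0.
  move=> e' c cI; rewrite (sigE_comb _ P12 P3 cI) (sigE_comb _ P1 P2 cI) !volt_sigE //.
  rewrite chi_sigE //; ring.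
have E1 := harm hpos conn vP Ph HV HE vw vx.
have E2 := harm hpos conn vP Ph HV HE vw vp.
move: E1 E2; rewrite /h /comb /J (volt0 vj vx vw) (volt0 vj vp vw).
rewrite /p chi_src // /x chi_on ?lexx //.
rewrite (rrec hpos vj vw vx vp) => E1 E2; lra.
Qed.

Lemma chi_compP e t w : bridge e -> in_comp e (src e) w -> chi e t w = 0.
Proof.
move=> br; case: w => [v|e' u] /=.
  case: ifP => // C1 C2; exfalso; move/negP: br; apply.
  by apply: connect_trans C2 _; rewrite conn_wo_sym.
case=> ne C2; rewrite (negbTE ne); case: ifP => // C1; exfalso; move/negP: br; apply.
by apply: connect_trans C2 _; rewrite conn_wo_sym.
Qed.

Lemma chi_compQ e t w : in_comp e (tgt e) w -> chi e t w = t.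
Proof.
case: w => [v|e' u] /=; first by move=> ->.
by case=> ne C2; rewrite (negbTE ne) C2.
Qed.

Lemma distP e t w : bridge e -> 0 <= t <= len e -> valid_point w ->
  t = 0 \/ in_comp e (src e) w ->
  j w (pt e t) (pt e t) = t + j w (PV (src e)) (PV (src e)).
Proof.
move=> br tI vw [->|C]; first by rewrite pt0 add0r.
by rewrite dist_chi // chi_compP // mulr0 subr0.
Qed.

Lemma distQ e t w : bridge e -> 0 <= t <= len e -> valid_point w ->
  t = len e \/ in_comp e (tgt e) w ->
  j w (pt e t) (pt e t) = len e - t + j w (PV (tgt e)) (PV (tgt e)).
Proof.
move=> br tI vw [->|C]; first by rewrite (ptL hpos) subrr add0r.
have LI : 0 <= len e <= len e by rewrite lexx ltW.
have := dist_chi br LI vw; rewrite (ptL hpos) chi_compQ // => E.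
by rewrite dist_chi // chi_compQ // E; ring.
Qed.

Lemma tent_formula e s v0 : 0 < s < len e ->
  let w : gpoint G := PV v0 in let y := PE e s in
  let p : gpoint G := PV (src e) in let q : gpoint G := PV (tgt e) in
  let sg := s / len e in
  j w y y = s * (len e - s) / len e + (1 - sg) * j w p p + sg * j w q q
            - sg * (1 - sg) * j p q q.
Proof.
move=> sI w y p q sg.
have vw : valid_point w := I. have vp : valid_point p := I.
have vq : valid_point q := I. have vy : valid_point y := sI.
have P1 := volt_PL vj vy vw. have Pt := tent_PL hpos sI.
have P2 := volt_PL vj vp vw. have P3 := volt_PL vj vq vw.
have P12 := PL_comb (-1) P1 Pt.
have P123 := PL_comb (-(1 - sg)) P12 P2.
set h := comb (comb (comb (J j w y) (-1) (tent e s)) (-(1 - sg)) (J j w p)) (-sg) (J j w q).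
have Ph : PL h ((([:: y; w] ++ [:: PE e s]) ++ [:: p; w]) ++ [:: q; w]) by apply: PL_comb.
have vP : validP ((([:: y; w] ++ [:: PE e s]) ++ [:: p; w]) ++ [:: q; w]).
  apply: validP_cat; last by apply: validP2.
  apply: validP_cat; last by apply: validP2.
  by apply: validP_cat; [apply: validP2 | move=> z [<-|[]]].
have HV : forall v, sigV h v = 0.
  move=> v; rewrite (sigV_comb hpos _ _ P123 P3) (sigV_comb hpos _ _ P12 P2).
  rewrite (sigV_comb hpos _ _ P1 Pt) !volt_sigV // (tent_sigV hpos sI); rewrite /sg /p /q /y /w; ring.
have HE : forall e c, 0 < c < len e -> sigE h e c = 0.
  move=> e' c cI; rewrite (sigE_comb _ P123 P3 cI) (sigE_comb _ P12 P2 cI).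
  rewrite (sigE_comb _ P1 Pt cI) !volt_sigE // (tent_sigE hpos sI cI) /sg /p /q /y /w; ring.
have Ey := harm hpos conn vP Ph HV HE vw vy.
have Ep := harm hpos conn vP Ph HV HE vw vp.
have Eq := harm hpos conn vP Ph HV HE vw vq.
move: Ey Ep Eq; rewrite /h /comb /J (volt0 vj vy vw) (volt0 vj vp vw) (volt0 vj vq vw) /=.
rewrite eqxx lexx.
rewrite (rrec hpos vj vw vy vp) (rrec hpos vj vw vy vq) (rrec hpos vj vw vq vp).
have F := rF1 hpos conn vj vw vp vq.
move=> Ey Ep Eq.
have jpy : j w p y = (1 - sg) * j w p p + sg * j w p q by lra.
have jqy : j w q y = (1 - sg) * j w p q + sg * j w q q by lra.
have jpq : j w p q = (j w p p + j w q q - j p q q) / 2 by lra.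
have jyy : j w y y = s * (len e - s) / len e + (1 - sg) * j w p y + sg * j w q y by lra.
rewrite jyy jpy jqy jpq; rewrite /sg; field; exact: lt0r_neq0 (hpos e).
Qed.
End Dist.

End MT8.
Import MT8.

Module MT9.
Set Implicit Arguments. Unset Strict Implicit. Unset Printing Implicit Defensive.

Section Final.
Variable R : realType.
Variable G : mgraph R.
Hypothesis hpos : forall e : edge G, 0 < len e.
Hypothesis conn : forall u v : vert G, connect (@adj _ G) u v.
Variable j : gpoint G -> gpoint G -> gpoint G -> R.
Hypothesis vj : voltage_fun j.
Implicit Types (e : edge G) (v : vert G).

Lemma transfer_src e e' w u : e' != e -> 0 <= u <= len e' ->
  in_comp e w (pt e' u) -> in_comp e w (PV (src e')).
Proof.
move=> ne uI; rewrite /pt; case: eqP => _ //; case: eqP => _ /=.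
  move=> C; apply: connect_trans C _; rewrite conn_wo_sym connect1 //.
  by apply/existsP; exists e'; rewrite ne !eqxx.
by case.
Qed.

Lemma transfer_tgt e e' w u : e' != e -> 0 <= u <= len e' ->
  in_comp e w (pt e' u) -> in_comp e w (PV (tgt e')).
Proof.
move=> ne uI H; have := transfer_src ne uI H => /= C.
apply: connect_trans C _; rewrite connect1 //.
by apply/existsP; exists e'; rewrite ne !eqxx.
Qed.

Lemma tentF e s v0 : 0 <= s <= len e ->
  let w : gpoint G := PV v0 in
  let p : gpoint G := PV (src e) in let q : gpoint G := PV (tgt e) in
  let sg := s / len e in
  j w (pt e s) (pt e s) = s * (len e - s) / len e + (1 - sg) * j w p p + sg * j w q q
            - sg * (1 - sg) * j p q q.
Proof.
move=> /andP [s0 sL] w p q sg.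
have Ln : len e != 0 by rewrite gt_eqF.
case: (eqVneq s 0) => [s00|sn0].
  rewrite /sg s00 pt0 !mul0r !subr0; ring.
case: (eqVneq s (len e)) => [sL'|sLn].
  rewrite /sg sL' (ptL hpos) divff // subrr; ring.
have sI : 0 < s < len e by rewrite lt_neqAle eq_sym sn0 s0 lt_neqAle sLn sL.
by rewrite ptI // (tent_formula hpos conn vj).
Qed.
End Final.

End MT9.
Import MT9.

Theorem theorem3p9 (R : realType) (G : mgraph R)
  (j : gpoint G -> gpoint G -> gpoint G -> R) (tau : R) (a : vert G -> int) :
  is_metrized_graph G -> adequate G ->
  voltage_fun j -> is_tau j tau ->
  degD a != (-2)%R ->
  let r := resist j in
  let g := gmuD j tau a in
  let tD := tauD j tau a in
  (* (1) x, y on the same bridge e *)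
  (forall (e : edge G) (t s : R), bridge e ->
     0 <= t <= len e -> 0 <= s <= len e ->
     g (pt e t) (pt e s) = tD (pt e t) (pt e s) - `|t - s| / 2)
  /\
  (* (2) x on e_i, y on e_j, e_i <> e_j, both bridges *)
  (forall (ei ej : edge G) (t s : R), ei != ej -> bridge ei -> bridge ej ->
     0 <= t <= len ei -> 0 <= s <= len ej ->
     let x := pt ei t in let y := pt ej s in
     let pi := PV (src ei) in let qi := PV (tgt ei) in
     let pj := PV (src ej) in let qj := PV (tgt ej) in
     [/\ src_between ei t y -> src_between ej s x ->
           g x y = tD x y - (t + s + r pi pj) / 2,
         src_between ei t y -> tgt_between ej s x ->
           g x y = tD x y - (t - s + len ej + r pi qj) / 2,
         tgt_between ei t y -> src_between ej s x ->
           g x y = tD x y - (- t + s + len ei + r qi pj) / 2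
       & tgt_between ei t y -> tgt_between ej s x ->
           g x y = tD x y - (- t - s + len ei + len ej + r qi qj) / 2])
  /\
  (* (3) x on the bridge e_i, y on the non-bridge e_j, e_i <> e_j *)
  (forall (ei ej : edge G) (t s : R), ei != ej -> bridge ei -> ~ bridge ej ->
     0 <= t <= len ei -> 0 <= s <= len ej ->
     let x := pt ei t in let y := pt ej s in
     let pi := PV (src ei) in let qi := PV (tgt ei) in
     let pj := PV (src ej) in let qj := PV (tgt ej) in
     let Li := len ei in let Lj := len ej in
     let T1 := s * (Lj - r pj qj + r pi qj - r pi pj) / Lj + t + r pi pj in
     let T2 := s * (Lj - r pj qj + r qi qj - r qi pj) / Lj - t + Li + r qi pj in
     (in_comp ei (src ei) y ->
        g x y = tD x y + s ^+ 2 * (Lj - r pj qj) / (2 * Lj ^+ 2) - T1 / 2) /\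
     (in_comp ei (tgt ei) y ->
        g x y = tD x y + s ^+ 2 * (Lj - r pj qj) / (2 * Lj ^+ 2) - T2 / 2)).
Proof.
move=> [hpos _ conn] _ vj _ hd r g tD.
have GT x y : valid_point x -> valid_point y -> g x y = tD x y - j y x x / 2.
  by move=> vx vy; rewrite /g /tD (gmu_tau hpos conn vj tau hd vx vy).
have RS := rsym hpos conn vj.
split; [|split].
- move=> e t s br tI sI.
  have vx := valid_pt tI. have vy := valid_pt sI.
  rewrite GT //; congr (_ - _ / 2).
  have D1 := dist_chi hpos conn vj br tI vy.
  have D2 := dist_chi hpos conn vj br sI vy.
  rewrite (volt0 vj vy vy) in D2.
  rewrite (chi_on br tI sI) in D1. rewrite (chi_on br sI sI) lexx in D2.
  rewrite D1; case: (leP s t) => st.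
    rewrite ger0_norm ?subr_ge0 //; lra.
  rewrite ltr0_norm ?subr_lt0 //; lra.
- move=> ei ej t s ne bi bj tI sI x y pi qi pj qj.
  have vx : valid_point x := valid_pt tI. have vy : valid_point y := valid_pt sI.
  have nji : ej != ei by rewrite eq_sym.
  have vpi : valid_point pi := I. have vqi : valid_point qi := I.
  have vpj : valid_point pj := I. have vqj : valid_point qj := I.
  rewrite /src_between /tgt_between /x.
  split => Hx Hy; rewrite GT //; congr (_ - _ / 2); rewrite /r /resist.
  + rewrite (distP hpos conn vj bi tI vy Hx) (RS pi y vpi vy).
    have H' : s = 0 \/ in_comp ej (src ej) pi.
      by case: Hy => [s0|C]; [left | right; exact: transfer_src ne tI C].
    rewrite (distP hpos conn vj bj sI vpi H') (RS pi pj vpi vpj); ring.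
  + rewrite (distP hpos conn vj bi tI vy Hx) (RS pi y vpi vy).
    have H' : s = len ej \/ in_comp ej (tgt ej) pi.
      by case: Hy => [s0|C]; [left | right; exact: transfer_src ne tI C].
    rewrite (distQ hpos conn vj bj sI vpi H') (RS pi qj vpi vqj); ring.
  + rewrite (distQ hpos conn vj bi tI vy Hx) (RS qi y vqi vy).
    have H' : s = 0 \/ in_comp ej (src ej) qi.
      by case: Hy => [s0|C]; [left | right; exact: transfer_tgt ne tI C].
    rewrite (distP hpos conn vj bj sI vqi H') (RS qi pj vqi vpj); ring.
  + rewrite (distQ hpos conn vj bi tI vy Hx) (RS qi y vqi vy).
    have H' : s = len ej \/ in_comp ej (tgt ej) qi.
      by case: Hy => [s0|C]; [left | right; exact: transfer_tgt ne tI C].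
    rewrite (distQ hpos conn vj bj sI vqi H') (RS qi qj vqi vqj); ring.
- move=> ei ej t s ne bi _ tI sI x y pi qi pj qj Li Lj T1 T2.
  have vx : valid_point x := valid_pt tI. have vy : valid_point y := valid_pt sI.
  have vpi : valid_point pi := I. have vqi : valid_point qi := I.
  have vpj : valid_point pj := I. have vqj : valid_point qj := I.
  have Ln : Lj != 0 by rewrite /Lj gt_eqF.
  split => Hy; rewrite GT // /T1 /T2 /r /resist.
  + rewrite (distP hpos conn vj bi tI vy (or_intror Hy)) (RS pi y vpi vy).
    rewrite /y (tentF hpos conn vj (src ei) sI) /=.
    rewrite -/pj -/qj -/pi -/Lj (RS pj qj vpj vqj) (RS pi qj vpi vqj) (RS pi pj vpi vpj).
    by field.
  + rewrite (distQ hpos conn vj bi tI vy (or_intror Hy)) (RS qi y vqi vy).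
    rewrite /y (tentF hpos conn vj (tgt ei) sI) /=.
    rewrite -/pj -/qj -/qi -/Lj -/Li (RS pj qj vpj vqj) (RS qi qj vqi vqj) (RS qi pj vqi vpj).
    by field.
Qed.
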